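(* Let $l\in\mathbb{N}$ and $k_1,\dots,k_l\in\mathbb{N}$ with $k_j\mid k_{j-1}$ for $j=2,\dots,l$. Let $M\subset\mathbb{N}$ be the finite set with $\Lambda_{k_1}-\Lambda_{k_2}+\dots+(-1)^{l-1}\Lambda_{k_l}=\sum_{m\in M}\Psi_m$. Then $M$ is either empty, or it satisfies both of the following: (1) $M$ contains a largest number $m_1$, and $\mathcal{G}(M)$ is a directed graph with root $m_1$, i.e. every vertex of $\mathcal{G}(M)$ can be reached from $m_1$ by a directed path; (2) there is a directed path in $\mathcal{G}(M)$ consisting only of $2$-edges which contains a vertex of every $2$-plane of $\mathcal{G}(M)$.
   Context: $\mathbb{Q}\langle S^{UR}\rangle$ is the group ring over $\mathbb{Q}$ of the group of roots of unity, with elements $\sum b_j\langle\zeta_j\rangle$; $\Lambda_m=\sum_{a=0}^{m-1}\langle e^{2\pi i a/m}\rangle$ and $\Psi_m=\sum_{\zeta\text{ of order }m}\langle\zeta\rangle$, so $\Lambda_k=\sum_{m\mid k}\Psi_m$. For a finite set $M\subset\mathbb{N}$ the directed graph $\mathcal{G}(M)$ has vertex set $M$, and there is a directed edge from $m_1\in M$ to $m_2\in M$ iff $m_1/m_2=p^e$ for some prime $p$ and some $e\ge1$ and there is no $m_3\in M\setminus\{m_1,m_2\}$ with $m_2\mid m_3\mid m_1$; such an edge is labelled $p$ and called a $p$-edge. For a prime $p$, the $p$-planes of $\mathcal{G}(M)$ are the connected components of the graph obtained from $\mathcal{G}(M)$ by deleting all $p$-edges. *)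

(* Defs.v *)
From Stdlib Require Import Relations.
From mathcomp Require Import all_boot all_order all_algebra all_field.
Set Implicit Arguments. Unset Strict Implicit. Unset Printing Implicit Defensive.
Import Order.TTheory GRing.Theory Num.Theory.
Local Open Scope ring_scope.

(* Elements of the group ring Q<S^UR> are represented by their coefficient
   functions algC -> rat (coefficient of <zeta>; zero off the roots of unity
   for all elements considered here).  algC contains all roots of unity. *)
Definition grpring := algC -> rat.

(* Lambda_m = sum_{a<m} <e^{2 pi i a/m}> : coefficient 1 at the m-th roots of unity *)
Definition Lambda (m : nat) : grpring :=
  fun z => if (0 < m)%N && (z ^+ m == 1) then 1%R else 0%R.

Definition Psi (m : nat) : grpring :=
  fun z => if m.-primitive_root z then 1%R else 0%R.

Definition pedge (M : seq nat) (p m1 m2 : nat) : Prop :=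
  [/\ m1 \in M, m2 \in M, prime p,
      (exists2 e, (0 < e)%N & m1 = (m2 * p ^ e)%N)
    & forall m3, m3 \in M -> m3 <> m1 -> m3 <> m2 -> ~ ((m2 %| m3)%N /\ (m3 %| m1)%N)].

Definition gedge (M : seq nat) (m1 m2 : nat) : Prop := exists p, pedge M p m1 m2.

Definition reachable (M : seq nat) (u v : nat) : Prop :=
  clos_refl_trans nat (gedge M) u v.

Definition same_pplane (M : seq nat) (p u v : nat) : Prop :=
  clos_refl_sym_trans nat (fun a b => exists2 q, q <> p & pedge M q a b) u v.

Definition ppath (M : seq nat) (p : nat) (s : seq nat) : Prop :=
  [/\ s <> [::], all (fun v => v \in M) s
    & forall i, (i.+1 < size s)%N -> pedge M p (nth 0%N s i) (nth 0%N s i.+1)].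

(* Main.v *)
Require Import Defs.
From Stdlib Require Import Relations.
From mathcomp Require Import all_boot all_order all_algebra all_field zify.
Import Order.TTheory GRing.Theory Num.Theory.
Set Implicit Arguments. Unset Strict Implicit.
Local Open Scope nat_scope.

Definition F (k : seq nat) (u : nat) := find (fun x => ~~ (u %| x)) k.

Lemma chain_dvd k i j : sorted (fun a b => b %| a) k -> i <= j -> j < size k ->
  nth 0 k j %| nth 0 k i.
Proof.
move=> sk; rewrite leq_eqVlt => /orP[/eqP -> //|lij] jk.
have tr : transitive (fun a b : nat => b %| a).
  by move=> y x z yx zy; apply: dvdn_trans zy yx.
by apply: (sorted_ltn_nth tr 0 sk) => //; rewrite inE // (ltn_trans lij jk).
Qed.

Lemma Fle k u : F k u <= size k.
Proof. exact: find_size. Qed.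

Lemma Fchar k u j : sorted (fun a b => b %| a) k -> j < size k ->
  (u %| nth 0 k j) = (j < F k u).
Proof.
move=> sk jk; case: (ltnP j (F k u)) => hj.
  by have := before_find 0 hj => /negbFE.
have hs : has (fun x => ~~ (u %| x)) k by rewrite has_find (leq_ltn_trans hj jk).
have := nth_find 0 hs; rewrite -/(F k u) => nd.
apply/negbTE; apply: contra nd => uj.
by apply: dvdn_trans uj (chain_dvd sk hj jk).
Qed.

Lemma Fmono k u u' : sorted (fun a b => b %| a) k -> u %| u' -> F k u' <= F k u.
Proof.
move=> sk uu; rewrite leqNgt; apply/negP => lt.
have jk : F k u < size k := leq_trans lt (Fle k u').
have := Fchar u' sk jk; rewrite lt => /(dvdn_trans uu).
by rewrite (Fchar u sk jk) ltnn.
Qed.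

Lemma F_eq k u n : sorted (fun a b => b %| a) k -> n <= size k ->
  (forall j, j < size k -> (u %| nth 0 k j) = (j < n)) -> F k u = n.
Proof.
move=> sk nk h; apply/eqP; rewrite eqn_leq; apply/andP; split; rewrite leqNgt; apply/negP => lt.
  have jk : n < size k := leq_trans lt (Fle k u).
  by have := h n jk; rewrite (Fchar u sk jk) lt ltnn.
have jk : F k u < size k := leq_trans lt nk.
by have := h _ jk; rewrite lt (Fchar u sk jk) ltnn.
Qed.

Lemma F_min k x y : sorted (fun a b => b %| a) k -> coprime x y ->
  F k (x * y) = minn (F k x) (F k y).
Proof.
move=> sk cxy; apply: F_eq => //; first by rewrite geq_min Fle.
by move=> j jk; rewrite Gauss_dvd // (Fchar x sk jk) (Fchar y sk jk) leq_min.
Qed.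

Local Open Scope ring_scope.

Lemma alt_sum n : \sum_(j < n) (-1) ^+ j = (odd n : nat)%:R :> rat.
Proof.
elim: n => [|n IH]; first by rewrite big_ord0.
rewrite big_ord_recr /= IH -signr_odd; case: (odd n) => /=.
  by rewrite expr1 addrN.
by rewrite expr0 add0r.
Qed.

Lemma sum_pred_ord n m : (m <= n)%N ->
  \sum_(j < n) (-1) ^+ j * ((j < m)%N : nat)%:R = \sum_(j < m) (-1) ^+ j :> rat.
Proof.
move=> mn; rewrite -(subnKC mn) big_split_ord /=.
rewrite [X in _ + X]big1 ?addr0; last by move=> i _; rewrite ltnNge leq_addr mulr0.
by apply: eq_bigr => i _; rewrite ltn_ord mulr1.
Qed.

Lemma Mchar (k M : seq nat) :
  (forall j, j \in k -> (0 < j)%N) ->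
  sorted (fun a b => b %| a)%N k ->
  uniq M ->
  (forall z : algC,
     \sum_(j < size k) (-1) ^+ j * Lambda (nth 0%N k j) z
     = \sum_(m <- M) Psi m z) ->
  forall u, (0 < u)%N -> (u \in M) = odd (F k u).
Proof.
move=> kpos sk uM hz u u0.
have [z pz] := C_prim_root_exists u0.
have := hz z.
have -> : \sum_(j < size k) (-1) ^+ j * Lambda (nth 0%N k j) z
   = \sum_(j < size k) (-1) ^+ j * ((j < F k u)%N : nat)%:R.
  apply: eq_bigr => j _; congr (_ * _).
  rewrite /Lambda kpos ?mem_nth //= -(prim_order_dvd pz) (Fchar u sk (ltn_ord j)).
  by case: (j < F k u)%N.
rewrite sum_pred_ord ?Fle // alt_sum.
have -> : \sum_(m <- M) Psi m z = \sum_(m <- M) ((m == u) : nat)%:R.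
  apply: eq_bigr => m _; rewrite /Psi.
  case: eqP => [-> | ne]; first by rewrite pz.
  case pm: (m.-primitive_root z) => //; exfalso; apply: ne.
  apply/eqP; rewrite eqn_dvd (prim_order_dvd pm) (prim_order_dvd pz).
  by rewrite (prim_expr_order pz) (prim_expr_order pm) eqxx.
rewrite -natr_sum => /eqP; rewrite eqr_nat => /eqP E.
have E2 : (\sum_(i <- M) (i == u) = (u \in M))%N.
  rewrite -(count_uniq_mem u uM).
  elim: (M) => [|a s IH]; first by rewrite big_nil.
  by rewrite big_cons IH /= eq_sym.
by move: E; rewrite E2; case: (u \in M); case: (odd _).
Qed.

Local Open Scope nat_scope.

Lemma Kdvd r m n q : prime r -> 0 < m -> 0 < n -> r.-nat q -> m %| n * q ->
  logn r m <= logn r n -> m %| n.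
Proof.
move=> pr m0 n0 rq mnq le.
have q0 : 0 < q by case/andP: rq.
rewrite -(partnC r m0) -(partnC r n0); apply: dvdn_mul.
  by rewrite !p_part dvdn_exp2l.
have nq0 : 0 < n * q by rewrite muln_gt0 n0.
have := partn_dvd (r^') nq0 mnq.
by rewrite partnM // (@part_p'nat (r^') q) ?pnatNK // muln1.
Qed.

Lemma test (p r : nat) : p \in (r : nat_pred) -> p = r.
Proof. rewrite inE. move=> /eqP. done. Qed.

Definition Mp k u := (0 < u) && odd (F k u).

Lemma lemA k r v : (forall j, j \in k -> 0 < j) -> sorted (fun a b => b %| a) k ->
  prime r -> Mp k v ->
  (forall m, Mp k m -> logn r m = logn r v -> m %| v) \/
  (exists p e, [/\ prime p, p != r, 0 < e & Mp k (v * p ^ e)]).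
Proof.
move=> kpos sk pr /andP[v0 oJ].
set J := F k v in oJ.
have J0 : 0 < J by case: (J) oJ.
have Jk : J <= size k := Fle k v.
have kp : forall i, i < size k -> 0 < nth 0 k i by move=> i ik; apply/kpos/mem_nth.
have vd : forall i, i < J -> v %| nth 0 k i.
  by move=> i iJ; rewrite (Fchar v sk (leq_trans iJ Jk)).
pose w i := if i.+1 < J then nth 0 k i.+1 else v.
have vw : forall i, i < J -> v %| w i.
  by move=> i iJ; rewrite /w; case: ifP => // h; apply: vd.
have wk : forall i, i < J -> w i %| nth 0 k i.
  move=> i iJ; rewrite /w; case: ifP => h; last by apply: vd.
  by apply: chain_dvd => //; apply: leq_trans h Jk.
have w0 : forall i, i < J -> 0 < w i.
  by move=> i iJ; rewrite /w; case: ifP => // h; apply: kp (leq_trans h Jk).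
case: (boolP (has (fun i => ~~ odd i && ~~ r.-nat (nth 0 k i %/ w i)) (iota 0 J))).
  case/hasP => i; rewrite mem_iota add0n => /andP[_ iJ] /andP[ei nr].
  right.
  have ik : i < size k := leq_trans iJ Jk.
  set K := nth 0 k i in nr.
  have K0 : 0 < K := kp i ik.
  have q0 : 0 < K %/ w i by rewrite divn_gt0 ?w0 // dvdn_leq // wk.
  move: nr; rewrite /pnat q0 /= => /allPn[p pq]; rewrite inE => npr.
  have pp : prime p by move: pq; rewrite mem_primes => /andP[].
  have Kw : K = w i * (K %/ w i) by rewrite mulnC divnK // wk.
  have lt1 : logn p (w i) < logn p K.
    rewrite [X in _ < logn p X]Kw lognM ?w0 // -[X in X < _]addn0 ltn_add2l logn_gt0 //.
  have le1 : logn p v <= logn p (w i) by apply: dvdn_leq_log; [apply: w0 | apply: vw].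
  set d := logn p K - logn p v.
  exists p, d; split => //; first by rewrite subn_gt0 (leq_ltn_trans le1 lt1).
  have uK : v * p ^ d %| K.
    have KvE : K = v * (K %/ v) by rewrite mulnC divnK // vd.
    rewrite [X in _ %| X]KvE dvdn_mul //.
    rewrite pfactor_dvdn // ?logn_div ?vd //.
    by rewrite divn_gt0 ?v0 // dvdn_leq // vd.
  have luK : logn p (v * p ^ d) = logn p K.
    rewrite lognM // ?expn_gt0 ?(prime_gt0 pp) //.
    have -> : logn p (p ^ d) = d by apply: pfactorK.
    by rewrite subnKC // (leq_trans le1 (ltnW lt1)).
  rewrite /Mp; apply/andP; split; first by rewrite muln_gt0 v0 expn_gt0 prime_gt0.
  have hi : i < F k (v * p ^ d) by rewrite -(Fchar _ sk ik).
  have hJ : F k (v * p ^ d) <= J by apply: Fmono => //; apply: dvdn_mulr.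
  suff -> : F k (v * p ^ d) = i.+1 by rewrite /= ei.
  apply/eqP; rewrite eqn_leq hi andbT.
  move: (vw i iJ) (wk i iJ); rewrite /w; case: ifP => h _ _; last first.
    by apply: leq_trans hJ _; rewrite leqNgt h.
  rewrite leqNgt -(Fchar _ sk (leq_trans h Jk)); apply/negP => ud.
  have := dvdn_leq_log p (kp _ (leq_trans h Jk)) ud.
  by rewrite luK leqNgt; move: lt1; rewrite /w h => ->.
move/hasPn => hn; left => m /andP[m0 oJ'] lr.
set J' := F k m in oJ'.
have J'0 : 0 < J' by case: (J') oJ'.
have nat_of : forall i, i < J -> ~~ odd i -> r.-nat (nth 0 k i %/ w i).
  move=> i iJ ei; have := hn i; rewrite mem_iota add0n iJ ei /= => /(_ isT).
  by rewrite negbK.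
have dec : forall i, i < J -> nth 0 k i = w i * (nth 0 k i %/ w i).
  by move=> i iJ; rewrite mulnC divnK // wk.
case: (leqP J J') => hJJ.
  have iJ : J.-1 < J by rewrite prednK.
  have ik : J.-1 < size k := leq_trans iJ Jk.
  have md : m %| nth 0 k J.-1 by rewrite (Fchar m sk ik) -/J' (leq_trans iJ hJJ).
  have wv : w J.-1 = v by rewrite /w prednK // ltnn.
  apply: (Kdvd pr m0 v0 (nat_of _ iJ _)); last by rewrite lr.
    by move: oJ; rewrite -{1}(prednK J0) /=; case: (odd _).
  by rewrite -wv -dec.
exfalso.
have iJ : J'.-1 < J by rewrite (leq_ltn_trans (leq_pred _)).
have ik : J'.-1 < size k := leq_trans iJ Jk.
have i1k : J' < size k := leq_trans hJJ Jk.
have md : m %| nth 0 k J'.-1 by rewrite (Fchar m sk ik) -/J' prednK ?leqnn // ltnW.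
have wv : w J'.-1 = nth 0 k J' by rewrite /w prednK // hJJ.
have : m %| nth 0 k J'.
  apply: (Kdvd pr m0 (kp _ i1k) (nat_of _ iJ _)).
  - by move: oJ'; rewrite -{1}(prednK J'0) /=; case: (odd _).
  - by rewrite -wv -dec.
  - by rewrite lr; apply: dvdn_leq_log; [apply: kp | apply: vd].
by rewrite (Fchar m sk i1k) ltnn.
Qed.


Definition Rq (M : seq nat) r a b := exists2 q, q <> r & pedge M q a b.

Lemma logn_other r p e m : prime r -> prime p -> p != r -> 0 < m ->
  logn r (m * p ^ e) = logn r m.
Proof.
move=> pr pp npr m0.
rewrite lognM ?expn_gt0 ?(prime_gt0 pp) // (@logn_coprime r (p ^ e)) ?addn0 //.
apply: coprimeXr; rewrite prime_coprime // dvdn_prime2 //.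
by rewrite eq_sym.
Qed.

Lemma mid_pow v p e m : prime p -> 0 < v -> v %| m -> m %| v * p ^ e ->
  exists2 c, c <= e & m = v * p ^ c.
Proof.
move=> pp v0 vm mu.
have E : m = v * (m %/ v) by rewrite mulnC divnK.
move: mu; rewrite E dvdn_pmul2l // => /(dvdn_pfactor _ _ pp)[c ce ->].
by exists c.
Qed.

Lemma level_reach k M r :
  (forall j, j \in k -> 0 < j) -> sorted (fun a b => b %| a) k -> prime r ->
  (forall u, 0 < u -> (u \in M) = odd (F k u)) ->
  (forall m, m \in M -> 0 < m) ->
  forall t, t \in M -> (forall m, m \in M -> logn r m = logn r t -> m <= t) ->
  forall v, v \in M -> logn r v = logn r t -> clos_refl_trans nat (Rq M r) t v.
Proof.
move=> kpos sk pr Mc Mpos t tM tmax.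
have MpE : forall u, u \in M -> Mp k u by move=> u uM; rewrite /Mp -Mc Mpos.
suff H : forall n v, t - v <= n -> v \in M -> logn r v = logn r t ->
    clos_refl_trans nat (Rq M r) t v.
  by move=> v; apply: H (leqnn _).
elim=> [|n IH] v hn vM lv.
  have vt := tmax v vM lv.
  have -> : v = t by lia.
  exact: rt_refl.
have v0 := Mpos v vM.
case: (lemA kpos sk pr (MpE v vM)) => [hl|[p [e [pp npr e0 hM]]]].
  have tv : t %| v by apply: hl; [apply: MpE | rewrite lv].
  have vt := tmax v vM lv.
  have -> : v = t by apply/eqP; rewrite eqn_leq vt dvdn_leq // Mpos.
  by apply: rt_refl.
pose P e := (0 < e) && Mp k (v * p ^ e).
have exP : exists e, P e by exists e; rewrite /P e0 hM.
case: (ex_minnP exP) => e1 /andP[e10 hM1] e1min.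
set u := v * p ^ e1.
have uM : u \in M by rewrite Mc; case/andP: hM1.
have lu : logn r u = logn r t by rewrite /u logn_other.
have vu : v < u.
  by rewrite /u -[X in X < _]muln1 ltn_pmul2l // -(expn0 p) ltn_exp2l ?prime_gt1.
apply: rt_trans (IH u _ uM lu) (rt_step _ _ _ _ _).
  have ut := tmax u uM lu.
  lia.
exists p; first by move/eqP; rewrite (negbTE npr).
split => //; first by exists e1.
move=> m3 m3M ne1 ne2 [d1 d2].
have [c ce Ec] := mid_pow pp v0 d1 d2.
have c0 : 0 < c by move: ne2; rewrite Ec; case: c {Ec ce} => //; rewrite expn0 muln1.
have ce' : c < e1.
  by rewrite ltn_neqAle ce andbT; apply/eqP => ec; apply: ne1; rewrite Ec ec.
have : P c by rewrite /P c0 -Ec MpE.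
by move/e1min; rewrite leqNgt ce'.
Qed.


Lemma desc_nth (s : seq nat) i j : sorted (fun x y => y <= x) s -> i <= j -> j < size s ->
  nth 0 s j <= nth 0 s i.
Proof.
move=> ss; rewrite leq_eqVlt => /orP[/eqP -> //|lij] js.
have tr : transitive (fun x y : nat => y <= x) by move=> y x z h1 h2; apply: leq_trans h2 h1.
by apply: (sorted_ltn_nth tr 0 ss) => //; rewrite inE (ltn_trans lij js).
Qed.

Lemma desc_strict (s : seq nat) i j : sorted (fun x y => y <= x) s -> uniq s -> i < j -> j < size s ->
  nth 0 s j < nth 0 s i.
Proof.
move=> ss us ij js; rewrite ltn_neqAle desc_nth ?(ltnW ij) // andbT.
by rewrite nth_uniq // ?(ltn_trans ij js) // eq_sym neq_ltn ij.
Qed.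

Lemma odd_decomp v : 0 < v -> exists2 o, odd o & v = 2 ^ logn 2 v * o.
Proof.
move=> v0; exists (v`_2^'); last by rewrite -p_part partnC.
by rewrite -[odd _]negbK -dvdn2 -p'natE // part_pnat.
Qed.

Lemma logn2_odd a o : odd o -> 0 < o -> logn 2 (2 ^ a * o) = a.
Proof.
move=> oo o0; rewrite lognM ?expn_gt0 // pfactorK // logn_coprime ?addn0 //.
by rewrite coprime2n.
Qed.

Lemma F_2o k a o : sorted (fun a b => b %| a) k -> odd o ->
  F k (2 ^ a * o) = minn (F k (2 ^ a)) (F k o).
Proof. by move=> sk oo; apply: F_min => //; apply: coprimeXl; rewrite coprime2n. Qed.

Lemma F1 k : sorted (fun a b => b %| a) k -> F k 1 = size k.
Proof. by move=> sk; apply: F_eq => // j jk; rewrite dvd1n jk. Qed.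

Lemma choose_o k : sorted (fun a b => b %| a) k -> (0 < size k) ->
  (forall j, j \in k -> 0 < j) ->
  exists2 o, odd o && (0 < o) & forall a o', odd o' -> 0 < o' ->
    odd (minn (F k (2 ^ a)) (F k o')) -> odd (minn (F k (2 ^ a)) (F k o)).
Proof.
move=> sk k0 kpos.
set k0v := nth 0 k 0.
have k0p : 0 < k0v by apply/kpos/mem_nth.
have bnd : forall o, 0 < F k o -> o <= k0v.
  by move=> o h; apply: dvdn_leq => //; rewrite (Fchar o sk k0).
pose P T := has (fun o => odd o && odd (F k o) && (F k o == T)) (iota 1 k0v).
case: (boolP (has (fun o => odd o && odd (F k o)) (iota 1 k0v))).
  case/hasP => o1 _ /andP[oo1 oF1].
  have exP : exists T, P T.
    exists (F k o1); apply/hasP; exists o1; last by rewrite oo1 oF1 eqxx.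
    rewrite mem_iota; have := bnd o1 (odd_gt0 oF1); have := odd_gt0 oo1; lia.
  case: (ex_minnP exP) => T /hasP[o]; rewrite mem_iota => /andP[ho1 _] /andP[/andP[oo oF] /eqP FT] Tmin.
  exists o; first by rewrite oo; lia.
  move=> a o' oo' o'0 h; set g := F k (2 ^ a) in h *.
  rewrite /minn; case: (ltnP g (F k o)) => hg; last first.
    by [].
  move: h; rewrite /minn; case: (ltnP g (F k o')) => hg' //.
  move=> oF'.
  have : P (F k o').
    apply/hasP; exists o'; last by rewrite oo' oF' eqxx.
    by rewrite mem_iota; move: (bnd o' (odd_gt0 oF')) => hb; lia.
  move/Tmin; rewrite -FT; lia.
move/hasPn => hn; exists 1 => // a o' oo' o'0.
rewrite F1 //; set g := F k (2 ^ a).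
have hg : g <= size k := Fle k _.
rewrite (minn_idPl hg).
case: (leqP g (F k o')) => h; first by [].
move=> oF'.
have : (odd o' && odd (F k o')) by rewrite oo' oF'.
have := hn o'; rewrite mem_iota; move: (bnd o' (odd_gt0 oF')) => hb.
by move=> /(_ ltac:(lia)) /negbTE ->.
Qed.


Lemma rt_reach M r a b : clos_refl_trans nat (Rq M r) a b -> reachable M a b.
Proof.
elim=> [x y [q _ e]|x|x y z _ h1 _ h2].
- by apply: rt_step; exists q.
- exact: rt_refl.
- exact: rt_trans h1 h2.
Qed.

Lemma main_aux (k M : seq nat) :
  (forall j, j \in k -> 0 < j) ->
  sorted (fun a b => b %| a) k -> uniq M ->
  (forall m, m \in M -> 0 < m) ->
  (forall u, 0 < u -> (u \in M) = odd (F k u)) ->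
  M = [::] \/
  ((exists2 m1, m1 \in M &
      (forall m, m \in M -> m <= m1) /\
      (forall v, v \in M -> reachable M m1 v)) /\
   (exists s, ppath M 2 s /\
      forall v, v \in M -> exists2 w, w \in s & same_pplane M 2 v w)).
Proof.
move=> kpos sk uM Mpos Mc.
have MpE : forall u, u \in M -> Mp k u by move=> u uM'; rewrite /Mp -Mc ?Mpos.
have [->|[v0 v0M]] : M = [::] \/ exists v0, v0 \in M.
  by case: (M) => [|a s]; [left | right; exists a; rewrite inE eqxx].
  by left.
right.
have oF0 : odd (F k v0) by case/andP: (MpE v0 v0M).
have k0 : 0 < size k by apply: leq_trans (odd_gt0 oF0) (Fle k v0).
set k0v := nth 0 k 0.
have k0p : 0 < k0v by apply/kpos/mem_nth.
have dk0 : forall m, m \in M -> m %| k0v.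
  by move=> m mM; rewrite (Fchar m sk k0); case/andP: (MpE m mM) => _ /odd_gt0.
have bndM : forall m, m \in M -> m <= k0v by move=> m mM; apply: dvdn_leq => //; apply: dk0.
have top : forall (Q : pred nat) v, v \in M -> Q v ->
    exists t, [/\ t \in M, Q t & forall m, m \in M -> Q m -> m <= t].
  move=> Q v vM Qv.
  have exP : exists n, (n \in M) && Q n by exists v; rewrite vM Qv.
  have ub : forall n, (n \in M) && Q n -> n <= k0v by move=> n /andP[nM _]; apply: bndM.
  case: (ex_maxnP exP ub) => t /andP[tM Qt] tmax.
  by exists t; split => // m mM Qm; apply: tmax; rewrite mM.
split.
  have [r rk pr] := prime_above k0v.
  have l0 : forall m, m \in M -> logn r m = 0.
    move=> m mM; apply: logn_coprime; rewrite prime_coprime //.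
    apply/negP => /dvdn_leq => /(_ (Mpos m mM)) h.
    by have := bndM m mM; lia.
  have [t [tM _ tmax]] := top predT v0 v0M isT.
  exists t => //; split => [m mM|v vM]; first exact: tmax.
  apply: (rt_reach (r := r)).
  apply: (level_reach kpos sk pr Mc Mpos tM) => //.
    by move=> m mM _; apply: tmax.
  by rewrite !l0.
have [o /andP[oo o0] oP] := choose_o sk k0 kpos.
have lev : forall v, v \in M -> 2 ^ logn 2 v * o \in M.
  move=> v vM; have [o' oo' Ev] := odd_decomp (Mpos v vM).
  have o'0 : 0 < o' by apply: odd_gt0.
  rewrite Mc ?muln_gt0 ?expn_gt0 ?o0 // F_2o //.
  apply: (oP _ o') => //.
  by rewrite -F_2o // -Ev -Mc ?Mpos.
have logw : forall a, logn 2 (2 ^ a * o) = a by move=> a; apply: logn2_odd.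
pose s := sort (fun x y => y <= x) [seq x <- M | x == 2 ^ logn 2 x * o].
have memS : forall x, (x \in s) = (x \in M) && (x == 2 ^ logn 2 x * o).
  by move=> x; rewrite mem_sort mem_filter andbC.
have tot : total (fun x y : nat => y <= x) by move=> x y; apply: leq_total.
have ss : sorted (fun x y => y <= x) s by apply: sort_sorted.
have us : uniq s by rewrite sort_uniq filter_uniq.
exists s; split.
  split.
  - have w0M := lev v0 v0M.
    have : 2 ^ logn 2 v0 * o \in s by rewrite memS w0M logw eqxx.
    by case: (s) => //.
  - by apply/allP => x; rewrite memS => /andP[].
  move=> i is1.
  have is0 : i < size s by apply: ltnW.
  have xs : nth 0 s i \in s by apply: mem_nth.
  have ys : nth 0 s i.+1 \in s by apply: mem_nth.
  set x := nth 0 s i in xs *; set y := nth 0 s i.+1 in ys *.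
  have yx : y < x by apply: desc_strict.
  move: xs ys; rewrite !memS => /andP[xM /eqP Ex] /andP[yM /eqP Ey].
  set a := logn 2 x in Ex; set b := logn 2 y in Ey.
  have ba : b < a.
    by move: yx; rewrite Ex Ey ltn_pmul2r // ltn_exp2l.
  have xE : x = y * 2 ^ (a - b) by rewrite Ex Ey mulnAC -expnD subnKC // ltnW.
  split => //.
    by exists (a - b); first by rewrite subn_gt0.
  move=> m3 m3M ne1 ne2 [d1 d2].
  have y0 : 0 < y by apply: Mpos.
  have d2' : m3 %| y * 2 ^ (a - b) by rewrite -xE.
  have [c ce Ec] := mid_pow (isT : prime 2) y0 d1 d2'.
  have E3 : m3 = 2 ^ (b + c) * o by rewrite Ec Ey mulnAC expnD.
  have m3s : m3 \in s by rewrite memS m3M {2}E3 logw -E3 eqxx.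
  have x0 : 0 < x by apply: Mpos.
  have ym : y < m3 by rewrite ltn_neqAle dvdn_leq ?Mpos // andbT eq_sym; apply/eqP.
  have mx : m3 < x by rewrite ltn_neqAle dvdn_leq // andbT; apply/eqP.
  have jS : index m3 s < size s by rewrite index_mem.
  have nj := nth_index 0 m3s.
  case: (leqP (index m3 s) i) => hj.
    by have := desc_nth ss hj is0; rewrite nj -/x; lia.
  by have := desc_nth ss hj jS; rewrite nj -/y; lia.
move=> v vM.
exists (2 ^ logn 2 v * o); first by rewrite memS lev // logw eqxx.
have [t [tM /eqP Qt tmax]] := top (fun n => logn 2 n == logn 2 v) v vM (eqxx _).
have tm : forall m, m \in M -> logn 2 m = logn 2 t -> m <= t.
  by move=> m mM lm; apply: tmax => //; rewrite lm Qt.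
have h1 := level_reach kpos sk (isT : prime 2) Mc Mpos tM tm vM (esym Qt).
have lw : logn 2 (2 ^ logn 2 v * o) = logn 2 t by rewrite logw Qt.
have h2 := level_reach kpos sk (isT : prime 2) Mc Mpos tM tm (lev v vM) lw.
apply: rst_trans (rst_sym _ _ _ _ (clos_rt_clos_rst _ _ _ _ h1)) (clos_rt_clos_rst _ _ _ _ h2).
Qed.


Local Open Scope ring_scope.

Theorem lemma6p8 (k : seq nat) (M : seq nat) :
  (forall j, j \in k -> (0 < j)%N) ->
  sorted (fun a b => b %| a)%N k ->
  uniq M -> (forall m, m \in M -> (0 < m)%N) ->
  (forall z : algC,
     \sum_(j < size k) (-1) ^+ j * Lambda (nth 0%N k j) z
     = \sum_(m <- M) Psi m z) ->
  M = [::] \/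
  ((exists2 m1, m1 \in M &
      (forall m, m \in M -> (m <= m1)%N) /\
      (forall v, v \in M -> reachable M m1 v)) /\
   (exists s, ppath M 2 s /\
      forall v, v \in M -> exists2 w, w \in s & same_pplane M 2 v w)).
Proof.
move=> kpos sk uM Mpos hz.
exact: (main_aux kpos sk uM Mpos (Mchar kpos sk uM hz)).
Qed.
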